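(* Let $\delta\ge0$ and let $T\in C^1(\mathbb{T}^1)$ be a diffeomorphism with $T'>0$ and rotation number $\rho\in D_\delta$, having an invariant probability measure with continuous positive density $h$. Suppose that for some $\nu\in\left[\frac{\delta}{1+\delta},1\right]$ there is $C$ with $|(T^{q_n})'(\xi)-1|\le C\Delta_n^\nu$ for all $n\ge0$, $\xi\in\mathbb{T}^1$. Then $h\in C^{\nu(1+\delta)-\delta}(\mathbb{T}^1)$.
   Context: An irrational $\rho$ is in $D_\delta$ if there is $C>0$ with $|\rho-p/q|\ge Cq^{-2-\delta}$ for all rationals $p/q$. Write $\rho\in(0,1)$ as a continued fraction $\rho=[k_1,k_2,\dots]$ with convergents $p_n/q_n$, where $p_0=0,q_0=1,p_{-1}=1,q_{-1}=0$, $p_n=k_np_{n-1}+p_{n-2}$, $q_n=k_nq_{n-1}+q_{n-2}$; set $\Delta_n=|q_n\rho-p_n|$. $C^\alpha$ for $\alpha\in(0,1]$ means $\alpha$-Hölder continuous; $C^0$ means continuous. *)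

(* Defs.v *)
From Stdlib Require Import Reals Lra Lia ZArith.
From Coquelicot Require Import Coquelicot.
Open Scope R_scope.

Fixpoint iterate (n : nat) (f : R -> R) (x : R) : R :=
  match n with
  | O => x
  | S m => f (iterate m f x)
  end.

(* Circle diffeomorphisms are represented through a lift F : R -> R with
   F (x + 1) = F x + 1.  C^1 with F' > 0. *)
Definition C1_lift_pos (F : R -> R) : Prop :=
  (forall x, F (x + 1) = F x + 1) /\
  (forall x, ex_derive F x) /\
  (forall x, continuous (Derive F) x) /\
  (forall x, 0 < Derive F x).

Definition rotation_number_is (F : R -> R) (rho : R) : Prop :=
  forall x, is_lim_seq (fun n => (iterate n F x - x) / INR n) rho.

Definition irrational (rho : R) : Prop :=
  forall (p : Z) (q : Z), (q <> 0)%Z -> rho <> IZR p / IZR q.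

Definition D_class (delta rho : R) : Prop :=
  irrational rho /\
  exists C, 0 < C /\
    forall (p : Z) (q : Z), (0 < q)%Z ->
      Rabs (rho - IZR p / IZR q) >= C * Rpower (IZR q) (- 2 - delta).

(* Continued fraction of rho in (0,1): remainders x_0 = rho,
   x_{n+1} = {1 / x_n};  partial quotients k_{n+1} = floor (1 / x_n),
   so that rho = [k_1, k_2, ...]. *)
Fixpoint cf_rem (rho : R) (n : nat) : R :=
  match n with
  | O => rho
  | S m => / cf_rem rho m - IZR (Int_part (/ cf_rem rho m))
  end.

Definition cf_k (rho : R) (n : nat) : nat :=
  match n with
  | O => O
  | S m => Z.to_nat (Int_part (/ cf_rem rho m))
  end.

(* cf_pq rho n = ((p_{n-1}, q_{n-1}), (p_n, q_n)), starting from
   p_{-1} = 1, q_{-1} = 0, p_0 = 0, q_0 = 1. *)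
Fixpoint cf_pq (rho : R) (n : nat) : (nat * nat) * (nat * nat) :=
  match n with
  | O => ((1%nat, 0%nat), (0%nat, 1%nat))
  | S m =>
      let '((pp, qp), (p, q)) := cf_pq rho m in
      ((p, q), (cf_k rho (S m) * p + pp, cf_k rho (S m) * q + qp)%nat)
  end.

Definition cf_p (rho : R) (n : nat) : nat := fst (snd (cf_pq rho n)).
Definition cf_q (rho : R) (n : nat) : nat := snd (snd (cf_pq rho n)).

Definition cf_Delta (rho : R) (n : nat) : R :=
  Rabs (INR (cf_q rho n) * rho - INR (cf_p rho n)).

(* h is the density (w.r.t. Lebesgue measure on R/Z, seen as a 1-periodic
   function on R) of a T-invariant probability measure, continuous, positive. *)
Definition invariant_density (F : R -> R) (h : R -> R) : Prop :=
  (forall x, h (x + 1) = h x) /\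
  (forall x, continuous h x) /\
  (forall x, 0 < h x) /\
  RInt h 0 1 = 1 /\
  (* invariance mu(T^{-1} I) = mu(I) on all arcs I = [F a, F b] *)
  (forall a b, RInt h (F a) (F b) = RInt h a b).

(* C^alpha: alpha-Hoelder for alpha in (0,1], continuous for alpha = 0 *)
Definition Holder (alpha : R) (h : R -> R) : Prop :=
  if Req_EM_T alpha 0 then forall x, continuous h x
  else exists K, forall x y, Rabs (h x - h y) <= K * Rpower (Rabs (x - y)) alpha.

(* Main.v *)
Require Import Defs.
From Stdlib Require Import Reals Lra Lia ZArith.
From Coquelicot Require Import Coquelicot.
Open Scope R_scope.

Definition cf_pm (rho : R) (n : nat) : nat := fst (fst (cf_pq rho n)).
Definition cf_qm (rho : R) (n : nat) : nat := snd (fst (cf_pq rho n)).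

Lemma cf_pq_S rho n :
  cf_p rho (S n) = (cf_k rho (S n) * cf_p rho n + cf_pm rho n)%nat /\
  cf_q rho (S n) = (cf_k rho (S n) * cf_q rho n + cf_qm rho n)%nat /\
  cf_pm rho (S n) = cf_p rho n /\ cf_qm rho (S n) = cf_q rho n.
Proof.
  unfold cf_p, cf_q, cf_pm, cf_qm. simpl.
  destruct (cf_pq rho n) as [[a b] [c d]]. simpl. tauto.
Qed.

Fixpoint Pm (rho : R) (n : nat) : R :=
  match n with O => 1 | S m => Pm rho m * cf_rem rho m end.

Lemma int_part_ge1 r : 1 < r -> (1 <= Int_part r)%Z /\ IZR (Int_part r) <= r /\ r - 1 < IZR (Int_part r).
Proof.
  intros H. destruct (base_Int_part r) as [H1 H2].
  split; [|split; lra].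
  assert (0 < IZR (Int_part r)) by lra. apply lt_IZR in H0. lia.
Qed.

Lemma INR_cf_k rho n : 0 < cf_rem rho n < 1 ->
  INR (cf_k rho (S n)) = IZR (Int_part (/ cf_rem rho n)) /\ 1 <= INR (cf_k rho (S n)).
Proof.
  intros H. simpl.
  assert (Hr : 1 < / cf_rem rho n).
  { rewrite <- Rinv_1. apply Rinv_lt_contravar; lra. }
  destruct (int_part_ge1 _ Hr) as [Hz _].
  rewrite INR_IZR_INZ, Z2Nat.id by lia. split; auto. apply IZR_le in Hz. exact Hz.
Qed.

Lemma cf_main rho : 0 < rho < 1 -> irrational rho -> forall n,
  0 < cf_rem rho n < 1 /\
  INR (cf_q rho n) * rho - INR (cf_p rho n) = (-1) ^ n * Pm rho (S n) /\
  INR (cf_qm rho n) * rho - INR (cf_pm rho n) = - (-1) ^ n * Pm rho n /\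
  (1 <= cf_q rho n)%nat /\ 0 < Pm rho (S n).
Proof.
  intros Hr Hirr. induction n as [|n IH].
  - simpl. unfold cf_q, cf_p, cf_qm, cf_pm. simpl. repeat split; try lra; lia.
  - destruct IH as [Hx [He [Hem [Hq HP]]]].
    destruct (cf_pq_S rho n) as [Ep [Eq [Epm Eqm]]].
    destruct (INR_cf_k rho n Hx) as [Hk Hk1].
    set (k := cf_k rho (S n)) in *.
    assert (Hxx : cf_rem rho n * cf_rem rho (S n) = 1 - INR k * cf_rem rho n).
    { simpl. rewrite Hk. field. lra. }
    assert (HxS : 0 <= cf_rem rho (S n) < 1).
    { simpl. destruct (base_Int_part (/ cf_rem rho n)). lra. }
    assert (He' : INR (cf_q rho (S n)) * rho - INR (cf_p rho (S n)) = (-1) ^ (S n) * Pm rho (S (S n))).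
    { rewrite Ep, Eq, !plus_INR, !mult_INR.
      change (Pm rho (S (S n))) with (Pm rho (S n) * cf_rem rho (S n)).
      change (Pm rho (S n)) with (Pm rho n * cf_rem rho n) in *.
      simpl pow.
      replace (INR k * INR (cf_q rho n) + INR (cf_qm rho n)) with
          (INR k * INR (cf_q rho n) + INR (cf_qm rho n)) by ring.
      transitivity (INR k * (INR (cf_q rho n) * rho - INR (cf_p rho n)) +
                    (INR (cf_qm rho n) * rho - INR (cf_pm rho n))); [ring|].
      rewrite He, Hem. simpl pow.
      replace (-1 * (-1) ^ n * (Pm rho n * cf_rem rho n * cf_rem rho (S n)))
        with (- (-1) ^ n * Pm rho n * (cf_rem rho n * cf_rem rho (S n))) by ring.
      rewrite Hxx. ring. }
    assert (HqS : (1 <= cf_q rho (S n))%nat).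
    { rewrite Eq. assert (1 <= k)%nat. { apply INR_le. simpl. lra. } nia. }
    assert (HxS' : 0 < cf_rem rho (S n)).
    { destruct HxS as [[H0|H0] _]; auto. exfalso.
      apply (Hirr (Z.of_nat (cf_p rho (S n))) (Z.of_nat (cf_q rho (S n)))). lia.
      rewrite <- !INR_IZR_INZ.
      assert (E : INR (cf_q rho (S n)) * rho - INR (cf_p rho (S n)) = 0).
      { rewrite He'. change (Pm rho (S (S n))) with (Pm rho (S n) * cf_rem rho (S n)).
        rewrite <- H0. ring. }
      assert (0 < INR (cf_q rho (S n))). { apply lt_0_INR. lia. }
      field_simplify_eq; lra. }
    split; [lra|]. split; [exact He'|]. split.
    + rewrite Epm, Eqm, He. simpl pow. ring.
    + split; auto. change (0 < Pm rho (S n) * cf_rem rho (S n)). nra.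
Qed.

Lemma Rpower_1_base e : Rpower 1 e = 1.
Proof. unfold Rpower. rewrite ln_1, Rmult_0_r. apply exp_0. Qed.

Section CF.
Variable rho : R.
Hypothesis Hr : 0 < rho < 1.
Hypothesis Hirr : irrational rho.

Lemma Pm_pos n : 0 < Pm rho n.
Proof. destruct n. simpl; lra. apply (cf_main rho Hr Hirr n). Qed.

Lemma Delta_Pm n : cf_Delta rho n = Pm rho (S n).
Proof.
  unfold cf_Delta. destruct (cf_main rho Hr Hirr n) as [_ [He _]].
  rewrite He, Rabs_mult, pow_1_abs, Rabs_right. ring. left; apply Pm_pos.
Qed.

Lemma Pm_dec n : Pm rho (S n) <= Pm rho n.
Proof.
  change (Pm rho n * cf_rem rho n <= Pm rho n).
  destruct (cf_main rho Hr Hirr n) as [Hx _]. pose proof (Pm_pos n). nra.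
Qed.

Lemma Pm_half n : Pm rho (S (S n)) <= Pm rho n / 2.
Proof.
  change (Pm rho n * cf_rem rho n * cf_rem rho (S n) <= Pm rho n / 2).
  destruct (cf_main rho Hr Hirr n) as [Hx _].
  destruct (cf_main rho Hr Hirr (S n)) as [HxS _].
  destruct (INR_cf_k rho n Hx) as [Hk Hk1].
  assert (Hxx : cf_rem rho n * cf_rem rho (S n) = 1 - INR (cf_k rho (S n)) * cf_rem rho n).
  { rewrite Hk. change (cf_rem rho (S n)) with (/ cf_rem rho n - IZR (Int_part (/ cf_rem rho n))). field. lra. }
  pose proof (Pm_pos n).
  assert (cf_rem rho n * cf_rem rho (S n) <= /2) by nra.
  rewrite Rmult_assoc. nra.
Qed.

Lemma cf_det n : INR (cf_q rho n) * Pm rho n + INR (cf_qm rho n) * Pm rho (S n) = 1.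
Proof.
  induction n as [|n IH].
  - unfold cf_q, cf_qm; simpl. lra.
  - destruct (cf_pq_S rho n) as [Ep [Eq [Epm Eqm]]].
    rewrite Eq, Eqm, plus_INR, mult_INR.
    destruct (cf_main rho Hr Hirr n) as [Hx _].
    destruct (INR_cf_k rho n Hx) as [Hk Hk1].
    assert (Hxx : cf_rem rho n * cf_rem rho (S n) = 1 - INR (cf_k rho (S n)) * cf_rem rho n).
    { rewrite Hk. change (cf_rem rho (S n)) with (/ cf_rem rho n - IZR (Int_part (/ cf_rem rho n))). field. lra. }
    change (Pm rho (S (S n))) with (Pm rho n * cf_rem rho n * cf_rem rho (S n)).
    change (Pm rho (S n)) with (Pm rho n * cf_rem rho n) in *.
    rewrite <- IH.
    transitivity (INR (cf_q rho n) * Pm rho n * (INR (cf_k rho (S n)) * cf_rem rho n + cf_rem rho n * cf_rem rho (S n)) + INR (cf_qm rho n) * (Pm rho n * cf_rem rho n)); [ring|].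
    rewrite Hxx. ring.
Qed.

Lemma cf_dioph delta : 0 <= delta -> D_class delta rho ->
  exists c, 0 < c /\ forall n, c * Rpower (Pm rho n) (1 + delta) <= Pm rho (S n).
Proof.
  intros Hd [_ [C [HC HD]]]. exists C. split; auto. intros n.
  destruct (cf_main rho Hr Hirr n) as [_ [He [_ [Hq _]]]].
  set (q := INR (cf_q rho n)). set (p := INR (cf_p rho n)).
  assert (Hq0 : 0 < q). { apply lt_0_INR. lia. }
  specialize (HD (Z.of_nat (cf_p rho n)) (Z.of_nat (cf_q rho n)) ltac:(lia)).
  rewrite <- !INR_IZR_INZ in HD. fold q p in HD.
  assert (E : Pm rho (S n) = q * Rabs (rho - p / q)).
  { rewrite <- Delta_Pm. unfold cf_Delta. fold q p.
    replace (q * rho - p) with (q * (rho - p / q)) by (field; lra).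
    rewrite Rabs_mult, Rabs_right; lra. }
  pose proof (cf_det n) as Hdet. fold q in Hdet.
  pose proof (Pm_pos n). pose proof (Pm_pos (S n)).
  assert (Hqp : q * Pm rho n <= 1).
  { assert (0 <= INR (cf_qm rho n)) by apply pos_INR. nra. }
  assert (H1 : Rpower (q * Pm rho n) (1 + delta) <= 1).
  { pattern 1 at 2; rewrite <- (Rpower_1_base (1 + delta)). apply Rle_Rpower_l; nra. }
  rewrite <- Rpower_mult_distr in H1 by nra.
  assert (Hqpos : 0 < Rpower q (1 + delta)) by apply exp_pos.
  assert (Hpp : 0 < Rpower (Pm rho n) (1 + delta)) by apply exp_pos.
  assert (E2 : q * Rpower q (-2 - delta) = / Rpower q (1 + delta)).
  { rewrite <- (Rpower_1 q) at 1 by lra. rewrite <- Rpower_plus, <- Rpower_Ropp.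
    f_equal. ring. }
  rewrite E.
  apply Rle_trans with (q * (C * Rpower q (-2 - delta))).
  2: { apply Rmult_le_compat_l; lra. }
  replace (q * (C * Rpower q (-2 - delta))) with (C * (q * Rpower q (-2 - delta))) by ring.
  rewrite E2. apply Rmult_le_compat_l; [lra|].
  apply (Rmult_le_reg_l (Rpower q (1 + delta))); auto.
  rewrite Rinv_r by lra. lra.
Qed.
End CF.

Lemma Rpower_pos x e : 0 < Rpower x e.
Proof. apply exp_pos. Qed.

Lemma Rpower_1_base' e : Rpower 1 e = 1.
Proof. unfold Rpower. rewrite ln_1, Rmult_0_r. apply exp_0. Qed.

Lemma key_power (x y c delta nu : R) : 0 < x -> 0 < y -> 0 < c -> nu <= 1 ->
  c * Rpower x (1 + delta) <= y ->
  x * Rpower y (nu - 1) <= Rpower c (nu - 1) * Rpower x (nu * (1 + delta) - delta).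
Proof.
  intros Hx Hy Hc Hnu H.
  assert (H1 : Rpower (c * Rpower x (1 + delta)) (1 - nu) <= Rpower y (1 - nu)).
  { apply Rle_Rpower_l; [lra|]. split; auto. pose proof (Rpower_pos x (1+delta)). nra. }
  rewrite <- Rpower_mult_distr, Rpower_mult in H1 by (auto; apply Rpower_pos).
  replace (nu - 1) with (- (1 - nu)) by ring.
  rewrite !Rpower_Ropp.
  replace (nu * (1 + delta) - delta) with (1 + - ((1 + delta) * (1 - nu))) by ring.
  rewrite Rpower_plus, Rpower_1, Rpower_Ropp by auto.
  pose proof (Rpower_pos c (1 - nu)). pose proof (Rpower_pos x ((1 + delta) * (1 - nu))).
  pose proof (Rpower_pos y (1 - nu)).
  rewrite <- Rmult_assoc. rewrite (Rmult_comm (/ _) x). rewrite Rmult_assoc.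
  apply Rmult_le_compat_l; [lra|].
  rewrite <- Rinv_mult. apply Rinv_le_contravar; [nra|lra].
Qed.

Lemma floor_nat (u d : R) : 0 <= u -> 0 < d -> exists b : nat, INR b * d <= u < INR b * d + d.
Proof.
  intros Hu Hd. destruct (base_Int_part (u / d)) as [H1 H2].
  assert (Hz : (0 <= Int_part (u / d))%Z).
  { assert (-1 < IZR (Int_part (u / d))).
    { assert (0 <= u / d) by (unfold Rdiv; apply Rmult_le_pos; [lra|left; apply Rinv_0_lt_compat; lra]). lra. }
    apply lt_IZR in H. lia. }
  exists (Z.to_nat (Int_part (u / d))). rewrite INR_IZR_INZ, Z2Nat.id by lia.
  split.
  - apply (Rmult_le_compat_r d) in H1; [|lra]. unfold Rdiv in H1.
    rewrite Rmult_assoc, Rinv_l, Rmult_1_r in H1 by lra. lra.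
  - assert (u / d < IZR (Int_part (u / d)) + 1) by lra.
    apply (Rmult_lt_compat_r d) in H; [|lra]. unfold Rdiv in H.
    rewrite Rmult_assoc, Rinv_l, Rmult_1_r in H by lra. lra.
Qed.

Section Abstract.
Variables (G : R -> R) (D : nat -> R) (M A c delta nu : R).
Hypothesis HDpos : forall n, 0 < D n.
Hypothesis HD0 : D 0%nat = 1.
Hypothesis HDdec : forall n, D (S n) <= D n.
Hypothesis HDhalf : forall n, D (S (S n)) <= D n / 2.
Hypothesis Hc : 0 < c.
Hypothesis HDdio : forall n, c * Rpower (D n) (1 + delta) <= D (S n).
Hypothesis Hdelta : 0 <= delta.
Hypothesis Hnu : nu <= 1.
Hypothesis Halpha : 0 < nu * (1 + delta) - delta.
Hypothesis HGb : forall s, Rabs (G s) <= M.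
Hypothesis HA : 0 <= A.
Hypothesis HGs : forall s n, Rabs (G (s + D (S n)) - G s) <= A * Rpower (D (S n)) nu.
Hypothesis HGc : forall s eps, 0 < eps -> exists eta, 0 < eta /\
   forall u, Rabs u < eta -> Rabs (G (s + u) - G s) < eps.

Let alpha := nu * (1 + delta) - delta.
Let Ac := A * Rpower c (nu - 1).
Let r := Rpower (/ 2) alpha.
Let B := 2 * Ac / (1 - r).

Lemma step_mult d B0 : (forall w, Rabs (G (w + d) - G w) <= B0) ->
  forall b : nat, forall w, Rabs (G (w + INR b * d) - G w) <= INR b * B0.
Proof.
  intros H b. induction b as [|b IH]; intros w.
  - simpl. rewrite Rmult_0_l, Rplus_0_r, Rminus_diag, Rabs_R0. lra.
  - rewrite S_INR.
    replace (w + (INR b + 1) * d) with ((w + INR b * d) + d) by ring.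
    eapply Rle_trans. 
    replace (G (w + INR b * d + d) - G w) with
       ((G (w + INR b * d + d) - G (w + INR b * d)) + (G (w + INR b * d) - G w)) by ring.
    apply Rabs_triang. specialize (H (w + INR b * d)). specialize (IH w). lra.
Qed.

Lemma one_level n s u : 0 <= u -> exists u', 0 <= u' < D (S n) /\
  Rabs (G (s + u) - G (s + u')) <= A * (u * Rpower (D (S n)) (nu - 1)).
Proof.
  intros Hu. set (d := D (S n)). assert (Hd : 0 < d) by apply HDpos.
  destruct (floor_nat u d Hu Hd) as [b [Hb1 Hb2]].
  exists (u - INR b * d). split; [lra|].
  pose proof (step_mult d (A * Rpower d nu) (fun w => HGs w n) b (s + (u - INR b * d))) as H.
  replace (s + (u - INR b * d) + INR b * d) with (s + u) in H by ring.
  eapply Rle_trans; [exact H|].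
  assert (E : Rpower d (nu - 1) = Rpower d nu / d).
  { unfold Rminus. rewrite Rpower_plus, Rpower_Ropp, Rpower_1 by lra. reflexivity. }
  rewrite E. pose proof (Rpower_pos d nu).
  assert (INR b <= u / d).
  { apply (Rmult_le_reg_r d); auto. unfold Rdiv. rewrite Rmult_assoc, Rinv_l; lra. }
  replace (A * (u * (Rpower d nu / d))) with ((u / d) * (A * Rpower d nu)) by (field; lra).
  apply Rmult_le_compat_r; [nra|lra].
Qed.

Lemma Dpow_pos n : 0 < Rpower (D n) alpha.
Proof. apply Rpower_pos. Qed.

Lemma one_level_cost n s u : 0 <= u -> u <= D n -> exists u', 0 <= u' < D (S n) /\
  Rabs (G (s + u) - G (s + u')) <= Ac * Rpower (D n) alpha.
Proof.
  intros Hu Hun. destruct (one_level n s u Hu) as [u' [Hu' Hc']].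
  exists u'. split; auto. eapply Rle_trans; [exact Hc'|]. unfold Ac.
  rewrite Rmult_assoc. apply Rmult_le_compat_l; auto.
  apply Rle_trans with (D n * Rpower (D (S n)) (nu - 1)).
  - apply Rmult_le_compat_r; [left; apply Rpower_pos|lra].
  - apply key_power; auto.
Qed.

Lemma r_lt1 : 0 < r < 1.
Proof.
  split. apply Rpower_pos. unfold r. rewrite <- (Rpower_1_base' alpha).
  apply Rlt_Rpower_l. exact Halpha. lra.
Qed.

Lemma B_ge : 2 * Ac + B * r = B /\ 0 <= Ac /\ Ac <= B.
Proof.
  pose proof r_lt1. assert (0 <= Ac). { unfold Ac. pose proof (Rpower_pos c (nu - 1)). nra. }
  unfold B. split; [field; lra|]. split; auto.
  apply Rle_trans with (2 * Ac). lra. unfold Rdiv.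
  rewrite <- (Rmult_1_r (2 * Ac)) at 1. apply Rmult_le_compat_l; [lra|].
  rewrite <- Rinv_1. apply Rinv_le_contravar; lra.
Qed.

Lemma multi_level J : forall n s u, 0 <= u < D n -> exists u', 0 <= u' < D (n + J)%nat /\
  Rabs (G (s + u) - G (s + u')) <= B * Rpower (D n) alpha.
Proof.
  pose proof B_ge as [HB1 [HAc HAcB]]. pose proof r_lt1 as Hr1.
  assert (HBpos : 0 <= B) by lra.
  cut (forall J n s u, 0 <= u < D n -> (exists u', 0 <= u' < D (n + J)%nat /\
      Rabs (G (s + u) - G (s + u')) <= B * Rpower (D n) alpha) /\
      (exists u', 0 <= u' < D (n + S J)%nat /\
      Rabs (G (s + u) - G (s + u')) <= B * Rpower (D n) alpha)).
  { intros HH n s u Hu. apply (HH J n s u Hu). }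
  clear J. intros J. induction J as [|J IH]; intros n s u Hu.
  - split.
    + exists u. rewrite Nat.add_0_r. split; auto. rewrite Rminus_diag, Rabs_R0.
      pose proof (Dpow_pos n). nra.
    + destruct (one_level_cost n s u) as [u' [Hu' Hc']]; try lra.
      exists u'. rewrite Nat.add_1_r. split; auto. pose proof (Dpow_pos n). nra.
  - split; [apply (IH n s u Hu)|].
    destruct (one_level_cost n s u) as [u1 [Hu1 Hc1]]; try lra.
    destruct (one_level_cost (S n) s u1) as [u2 [Hu2 Hc2]]; try lra.
    destruct (IH (S (S n)) s u2 Hu2) as [[u3 [Hu3 Hc3]] _].
    exists u3. replace (n + S (S J))%nat with (S (S n) + J)%nat by lia. split; auto.
    assert (Ha1 : Rpower (D (S n)) alpha <= Rpower (D n) alpha).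
    { apply Rle_Rpower_l; [unfold alpha; lra|]. split; auto. }
    assert (Ha2 : Rpower (D (S (S n))) alpha <= r * Rpower (D n) alpha).
    { unfold r. rewrite Rpower_mult_distr by (auto; lra).
      apply Rle_Rpower_l; [unfold alpha; lra|]. split; auto. pose proof (HDhalf n). lra. }
    replace (G (s + u) - G (s + u3)) with
      ((G (s + u) - G (s + u1)) + (G (s + u1) - G (s + u2)) + (G (s + u2) - G (s + u3))) by ring.
    eapply Rle_trans. apply Rabs_triang. eapply Rle_trans. apply Rplus_le_compat_r. apply Rabs_triang.
    pose proof (Dpow_pos n).
    assert (Ac * Rpower (D (S n)) alpha <= Ac * Rpower (D n) alpha) by (apply Rmult_le_compat_l; auto).
    assert (B * Rpower (D (S (S n))) alpha <= B * (r * Rpower (D n) alpha)) by (apply Rmult_le_compat_l; auto).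
    replace (B * Rpower (D n) alpha) with ((2 * Ac + B * r) * Rpower (D n) alpha) by (rewrite HB1; ring). nra.
Qed.

Lemma D_mono n m : (n <= m)%nat -> D m <= D n.
Proof.
  induction 1. lra. pose proof (HDdec m). lra.
Qed.

Lemma D_small eta : 0 < eta -> exists J, D J < eta.
Proof.
  intros He.
  assert (H : forall k, D (2 * k)%nat * (INR k + 1) <= 1).
  { induction k. simpl. rewrite HD0. lra.
    replace (2 * S k)%nat with (S (S (2 * k))) by lia. rewrite S_INR.
    pose proof (HDhalf (2 * k)). pose proof (HDpos (S (S (2 * k)))). pose proof (pos_INR k).
    nra. }
  destruct (archimed (/ eta)) as [H1 _].
  assert (Hz : (0 <= up (/ eta))%Z).
  { assert (0 < / eta) by (apply Rinv_0_lt_compat; lra).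
    apply le_IZR. lra. }
  set (k := Z.to_nat (up (/ eta))).
  assert (Hk : / eta < INR k + 1).
  { unfold k. rewrite INR_IZR_INZ, Z2Nat.id by lia. lra. }
  exists (2 * k)%nat. specialize (H k). pose proof (HDpos (2 * k)).
  assert (/ eta * eta = 1) by (field; lra).
  assert (H3 : D (2 * k)%nat * / eta < 1).
  { assert (0 < D (2 * k)%nat * (INR k + 1 - / eta)) by (apply Rmult_lt_0_compat; lra). nra. }
  replace (D (2 * k)%nat) with (D (2 * k)%nat * / eta * eta) by (field; lra). nra.
Qed.

Lemma holder_pos s t : 0 < t ->
  Rabs (G (s + t) - G s) <= (2 * M + Ac + B) * Rpower t alpha.
Proof.
  intros Ht. pose proof B_ge as [HB1 [HAc HAcB]]. pose proof r_lt1.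
  assert (HM : 0 <= M). { pose proof (HGb 0). pose proof (Rabs_pos (G 0)). lra. }
  pose proof (Rpower_pos t alpha) as Hta.
  destruct (Rle_lt_dec 1 t) as [Ht1|Ht1].
  - assert (1 <= Rpower t alpha).
    { rewrite <- (Rpower_1_base' alpha). apply Rle_Rpower_l; unfold alpha; lra. }
    eapply Rle_trans. unfold Rminus. apply Rabs_triang. rewrite Rabs_Ropp.
    pose proof (HGb (s + t)). pose proof (HGb s). nra.
  - assert (HN : exists N, D (S N) <= t < D N).
    { destruct (D_small t Ht) as [J HJ].
      assert (HJ' : D J <= t) by lra. clear - HJ' Ht1 HD0. induction J. rewrite HD0 in HJ'. lra.
      destruct (Rle_lt_dec (D J) t). apply IHJ; lra. exists J. lra. }
    destruct HN as [N [HN1 HN2]].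
    destruct (one_level N s t) as [u1 [Hu1 Hc1]]; [lra|].
    assert (Hc1' : Rabs (G (s + t) - G (s + u1)) <= Ac * Rpower t alpha).
    { eapply Rle_trans; [exact Hc1|]. unfold Ac. rewrite Rmult_assoc.
      apply Rmult_le_compat_l; auto. apply key_power; auto.
      eapply Rle_trans; [|apply HDdio]. apply Rmult_le_compat_l; [lra|].
      apply Rle_Rpower_l; unfold alpha; lra. }
    apply Rle_plus_epsilon. intros eps Heps.
    destruct (HGc s eps Heps) as [eta [Heta Hcont]].
    destruct (D_small eta Heta) as [J HJ].
    destruct (multi_level J (S N) s u1 Hu1) as [u' [Hu' Hc2]].
    assert (Hu'e : Rabs u' < eta).
    { rewrite Rabs_right by lra. pose proof (D_mono J (S N + J)%nat ltac:(lia)). lra. }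
    specialize (Hcont u' Hu'e).
    assert (Hc2' : B * Rpower (D (S N)) alpha <= B * Rpower t alpha).
    { apply Rmult_le_compat_l; [lra|]. apply Rle_Rpower_l; [unfold alpha; lra|]. split; auto. }
    replace (G (s + t) - G s) with
      ((G (s + t) - G (s + u1)) + (G (s + u1) - G (s + u')) + (G (s + u') - G s)) by ring.
    eapply Rle_trans. apply Rabs_triang. eapply Rle_trans. apply Rplus_le_compat_r. apply Rabs_triang.
    assert (0 <= 2 * M * Rpower t alpha) by nra. nra.
Qed.

Lemma holder_abstract : exists K, forall s t,
  Rabs (G (s + t) - G s) <= K * Rpower (Rabs t) alpha.
Proof.
  pose proof B_ge as [HB1 [HAc HAcB]]. pose proof r_lt1 as Hr1.
  assert (HM : 0 <= M). { pose proof (HGb 0). pose proof (Rabs_pos (G 0)). lra. }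
  exists (2 * M + Ac + B). intros s t.
  destruct (Rtotal_order t 0) as [Hl|[He|Hg]].
  - rewrite (Rabs_left t) by lra.
    assert (Hmt : 0 < - t) by lra. pose proof (holder_pos (s + t) (- t) Hmt) as H.
    replace (s + t + - t) with s in H by ring. rewrite <- Rabs_Ropp.
    replace (- (G (s + t) - G s)) with (G s - G (s + t)) by ring. exact H.
  - subst. rewrite Rplus_0_r, Rminus_diag, Rabs_R0.
    pose proof (Rpower_pos 0 alpha). nra.
  - rewrite (Rabs_right t) by lra. apply holder_pos; auto.
Qed.

End Abstract.

Lemma Rabs_le_inv a b : Rabs a <= b -> - b <= a <= b.
Proof. intros H. pose proof (Rle_abs a). pose proof (Rle_abs (- a)). rewrite Rabs_Ropp in H1. lra. Qed.

Section Dyn.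
Variables (F h : R -> R) (rho : R).
Hypothesis HF : C1_lift_pos F.
Hypothesis Hrot : rotation_number_is F rho.
Hypothesis Hh : invariant_density F h.

Lemma h_per x : h (x + 1) = h x.
Proof. apply Hh. Qed.
Lemma h_cont x : continuous h x.
Proof. apply Hh. Qed.
Lemma h_pos x : 0 < h x.
Proof. apply Hh. Qed.

Lemma h_per_Z (z : Z) : forall x, h (x + IZR z) = h x.
Proof.
  induction z using Z.peano_ind; intros x.
  - rewrite Rplus_0_r. reflexivity.
  - rewrite succ_IZR, <- Rplus_assoc, h_per. apply IHz.
  - rewrite <- (IHz x). rewrite <- h_per. f_equal. rewrite <- Z.sub_1_r, minus_IZR. ring.
Qed.

Lemma frac_decomp x : exists y z, 0 <= y <= 1 /\ x = y + IZR z.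
Proof.
  destruct (base_Int_part x) as [H1 H2].
  exists (x - IZR (Int_part x)), (Int_part x). split; [lra|ring].
Qed.

Lemma h_bounds : exists m M, 0 < m /\ forall x, m <= h x <= M.
Proof.
  assert (Hc : forall c, 0 <= c <= 1 -> continuity_pt h c).
  { intros c _. apply continuity_pt_filterlim. apply h_cont. }
  destruct (continuity_ab_maj h 0 1 ltac:(lra) Hc) as [xM [HM _]].
  destruct (continuity_ab_min h 0 1 ltac:(lra) Hc) as [xm [Hm _]].
  exists (h xm), (h xM). split. apply h_pos.
  intros x. destruct (frac_decomp x) as [y [z [Hy ->]]]. rewrite h_per_Z. auto.
Qed.

Lemma h_RInt a b : ex_RInt h a b.
Proof. apply (@ex_RInt_continuous R_CompleteNormedModule). intros; apply h_cont. Qed.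

Definition phi (x : R) : R := RInt h 0 x.

Lemma phi_diff a b : phi b - phi a = RInt h a b.
Proof.
  unfold phi. rewrite <- (RInt_Chasles h 0 a b) by apply h_RInt.
  change (plus (RInt h 0 a) (RInt h a b)) with (RInt h 0 a + RInt h a b). ring.
Qed.

Lemma phi_0 : phi 0 = 0.
Proof. unfold phi. rewrite RInt_point. reflexivity. Qed.

Lemma phi_1 : phi 1 = 1.
Proof. apply Hh. Qed.

Lemma phi_mono m M : (forall x, m <= h x <= M) -> forall a b, a <= b ->
  m * (b - a) <= phi b - phi a <= M * (b - a).
Proof.
  intros Hb a b Hab. rewrite phi_diff. split.
  - apply Rle_trans with (RInt (fun _ => m) a b).
    + rewrite RInt_const. change (scal (b - a) m) with ((b - a) * m). lra.
    + apply RInt_le; auto. apply ex_RInt_const. apply h_RInt. intros; apply Hb.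
  - apply Rle_trans with (RInt (fun _ => M) a b).
    + apply RInt_le; auto. apply h_RInt. apply ex_RInt_const. intros; apply Hb.
    + rewrite RInt_const. change (scal (b - a) M) with ((b - a) * M). lra.
Qed.

Lemma phi_plus1 x : phi (x + 1) = phi x + 1.
Proof.
  assert (E1 : phi (x + 1) - phi 1 = phi x - phi 0).
  { rewrite !phi_diff.
    pose proof (RInt_comp_lin (V := R_CompleteNormedModule) h 1 1 0 x (h_RInt _ _)) as E.
    replace (1 * 0 + 1) with 1 in E by ring. replace (1 * x + 1) with (x + 1) in E by ring.
    rewrite <- E. apply RInt_ext. intros y _.
    change (scal 1 (h (1 * y + 1))) with (1 * h (1 * y + 1)).
    rewrite Rmult_1_l, Rmult_1_l. apply h_per. }
  rewrite phi_1, phi_0 in E1. lra.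
Qed.

Lemma phi_plus_Z (z : Z) : forall x, phi (x + IZR z) = phi x + IZR z.
Proof.
  induction z using Z.peano_ind; intros x.
  - rewrite !Rplus_0_r. reflexivity.
  - rewrite succ_IZR, <- Rplus_assoc, phi_plus1, IHz. ring.
  - rewrite <- Z.sub_1_r, minus_IZR.
    pose proof (phi_plus1 (x + (IZR z - 1))) as E.
    replace (x + (IZR z - 1) + 1) with (x + IZR z) in E by ring. rewrite IHz in E. lra.
Qed.

Lemma phi_near m M : 0 < m -> (forall x, m <= h x <= M) -> forall y, Rabs (phi y - y) <= 1.
Proof.
  intros Hm Hb y. destruct (frac_decomp y) as [y0 [z [Hy ->]]].
  rewrite phi_plus_Z.
  pose proof (phi_mono m M Hb 0 y0 ltac:(lra)). pose proof (phi_mono m M Hb y0 1 ltac:(lra)).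
  rewrite phi_0 in *. rewrite phi_1 in *.
  apply Rabs_le. nra.
Qed.

Lemma phi_F x : phi (F x) = phi x + phi (F 0).
Proof.
  destruct Hh as [_ [_ [_ [_ Hinv]]]].
  pose proof (Hinv 0 x) as E. rewrite <- !phi_diff, phi_0 in E. lra.
Qed.

Lemma phi_near' y : Rabs (phi y - y) <= 1.
Proof. destruct h_bounds as [m [M [Hm Hb]]]. apply (phi_near m M Hm Hb). Qed.

Lemma phi_iter n x : phi (iterate n F x) = phi x + INR n * phi (F 0).
Proof.
  induction n. simpl. ring.
  change (iterate (S n) F x) with (F (iterate n F x)). rewrite phi_F, IHn, S_INR. ring.
Qed.

Lemma inv_n_lim : is_lim_seq (fun n => / INR n) 0.
Proof.
  pose proof (is_lim_seq_inv INR p_infty is_lim_seq_INR ltac:(discriminate)) as H.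
  exact H.
Qed.

Lemma rot_eq : phi (F 0) = rho.
Proof.
  set (c := phi (F 0)).
  set (u := fun n => (iterate n F 0 - 0) / INR n).
  assert (H1 : is_lim_seq u rho) by apply Hrot.
  assert (H2 : is_lim_seq u c).
  { apply (is_lim_seq_le_le_loc (fun n => c - 2 * / INR n) u (fun n => c + 2 * / INR n)).
    - exists 1%nat. intros n Hn. unfold u.
      assert (Hn' : 0 < INR n) by (apply lt_0_INR; lia).
      pose proof (phi_near' (iterate n F 0)) as Ha. pose proof (phi_near' 0) as Hb.
      rewrite phi_iter in Ha. rewrite phi_0 in *. fold c in Ha.
      apply Rabs_le_inv in Ha. apply Rabs_le_inv in Hb.
      replace ((iterate n F 0 - 0) / INR n) with (iterate n F 0 * / INR n) by (unfold Rdiv; ring).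
      assert (Hi : / INR n * INR n = 1) by (field; lra).
      assert (0 < / INR n) by (apply Rinv_0_lt_compat; lra).
      assert (E : iterate n F 0 * / INR n = (iterate n F 0 - INR n * c) * / INR n + c) by (field; lra).
      rewrite E.
      assert (-1 * / INR n <= (iterate n F 0 - INR n * c) * / INR n <= 1 * / INR n).
      { split; apply Rmult_le_compat_r; lra. }
      split; lra.
    - assert (L : is_lim_seq (fun n => c - 2 * / INR n) (c - 2 * 0)).
      { apply is_lim_seq_minus'. apply is_lim_seq_const. apply (is_lim_seq_scal_l _ 2 0). apply inv_n_lim. }
      replace (c - 2 * 0) with c in L by ring. exact L.
    - assert (L : is_lim_seq (fun n => c + 2 * / INR n) (c + 2 * 0)).
      { apply is_lim_seq_plus'. apply is_lim_seq_const. apply (is_lim_seq_scal_l _ 2 0). apply inv_n_lim. }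
      replace (c + 2 * 0) with c in L by ring. exact L. }
  apply is_lim_seq_unique in H1. apply is_lim_seq_unique in H2. rewrite H1 in H2.
  injection H2. auto.
Qed.

Lemma phi_is_derive x : is_derive phi x (h x).
Proof.
  apply (is_derive_RInt h phi 0 x).
  - apply filter_forall. intros y. unfold phi. apply (RInt_correct (V := R_CompleteNormedModule)). apply h_RInt.
  - apply h_cont.
Qed.

Lemma iter_ex_derive n : forall x, ex_derive (iterate n F) x.
Proof.
  induction n; intros x.
  - change (ex_derive (fun y : R => y) x). apply ex_derive_id.
  - change (ex_derive (fun y => F (iterate n F y)) x). apply ex_derive_comp.
    apply HF. apply IHn.
Qed.

Lemma iter_deriv n x : h x = Derive (iterate n F) x * h (iterate n F x).
Proof.
  assert (E1 : Derive (fun y => phi (iterate n F y)) x = Derive (iterate n F) x * h (iterate n F x)).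
  { rewrite Derive_comp. rewrite (is_derive_unique phi _ _ (phi_is_derive _)). reflexivity.
    eexists; apply phi_is_derive. apply iter_ex_derive. }
  rewrite <- E1. rewrite (Derive_ext _ (fun y => phi y + INR n * phi (F 0))) by apply phi_iter.
  symmetry. apply is_derive_unique.
  pose proof (is_derive_plus phi (fun _ => INR n * phi (F 0)) x (h x) zero (phi_is_derive x) (is_derive_const _ _)) as H.
  change (plus (h x) zero) with (h x + 0) in H. rewrite Rplus_0_r in H. exact H.
Qed.

Lemma phi_cont : continuity phi.
Proof.
  intros x. apply continuity_pt_filterlim. apply (ex_derive_continuous (K := R_AbsRing) (V := R_NormedModule) phi). eexists. apply phi_is_derive.
Qed.

Lemma phi_surj s : {x | phi x = s}.
Proof.
  pose proof (phi_near' (s - 1)). pose proof (phi_near' (s + 1)).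
  apply Rabs_le_inv in H. apply Rabs_le_inv in H0.
  destruct (IVT_gen phi (s - 1) (s + 1) s phi_cont) as [x [_ Hx]].
  - split. eapply Rle_trans. apply Rmin_l. lra. eapply Rle_trans. 2: apply Rmax_r. lra.
  - exists x; exact Hx.
Qed.

End Dyn.

Lemma sign_pow n : (-1) ^ n = 1 \/ (-1) ^ n = -1.
Proof. induction n; simpl; [left; ring|]. destruct IHn as [-> | ->]; [right|left]; ring. Qed.

Theorem lemma6 (delta : R) (F : R -> R) (rho : R) (h : R -> R) (nu : R) :
  0 <= delta ->
  C1_lift_pos F ->
  0 < rho < 1 ->
  rotation_number_is F rho ->
  D_class delta rho ->
  invariant_density F h ->
  delta / (1 + delta) <= nu <= 1 ->
  (exists C, forall (n : nat) (xi : R),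
      Rabs (Derive (iterate (cf_q rho n) F) xi - 1)
        <= C * Rpower (cf_Delta rho n) nu) ->
  Holder (nu * (1 + delta) - delta) h.
Proof.
  intros Hd HF Hr Hrot HDc Hh Hnu [C HC].
  assert (Hirr : irrational rho) by apply HDc.
  unfold Holder. destruct (Req_EM_T (nu * (1 + delta) - delta) 0) as [E0|E0].
  { intros x. apply Hh. }
  assert (Halpha : 0 < nu * (1 + delta) - delta).
  { assert (delta <= nu * (1 + delta)).
    { destruct Hnu as [Hnu _]. apply (Rmult_le_compat_r (1 + delta)) in Hnu; [|lra].
      replace (delta / (1 + delta) * (1 + delta)) with delta in Hnu by (field; lra). lra. }
    lra. }
  destruct (h_bounds F h Hh) as [m [M [Hm Hb]]].
  destruct (cf_dioph rho Hr Hirr delta Hd HDc) as [c [Hc Hdio]].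
  assert (HMpos : 0 < M) by (pose proof (Hb 0); lra).
  assert (HCpos : 0 <= C).
  { specialize (HC 0%nat 0). pose proof (Rabs_pos (Derive (iterate (cf_q rho 0) F) 0 - 1)).
    pose proof (Rpower_pos (cf_Delta rho 0) nu).
    destruct (Rle_dec 0 C); auto. nra. }
  set (phi := phi h).
  assert (Hmono := phi_mono F h Hh m M Hb).
  assert (Hinj : forall a b, phi a = phi b -> a = b).
  { intros a b Hab. destruct (Rtotal_order a b) as [H|[H|H]]; auto.
    - pose proof (Hmono a b ltac:(lra)). fold phi in H0. nra.
    - pose proof (Hmono b a ltac:(lra)). fold phi in H0. nra. }
  set (psi := fun s => proj1_sig (phi_surj F h Hh s)).
  assert (Hpsi : forall s, phi (psi s) = s).
  { intros s. unfold psi. destruct (phi_surj F h Hh s). simpl. auto. }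
  set (G := fun s => h (psi s)).
  assert (HGphi : forall x, G (phi x) = h x).
  { intros x. unfold G. f_equal. apply Hinj. apply Hpsi. }
  assert (HGb : forall s, Rabs (G s) <= M).
  { intros s. unfold G. pose proof (Hb (psi s)). rewrite Rabs_right; lra. }
  set (A := M * C).
  assert (HA : 0 <= A) by (unfold A; nra).
  assert (Hshift : forall n s, Rabs (G (s + (INR (cf_q rho n) * rho - INR (cf_p rho n))) - G s)
                    <= A * Rpower (Pm rho (S n)) nu).
  { intros n s.
    set (q := cf_q rho n). set (p := cf_p rho n).
    set (z := psi s).
    set (w := iterate q F z + IZR (- Z.of_nat p)).
    assert (Hw : psi (s + (INR q * rho - INR p)) = w).
    { apply Hinj. rewrite Hpsi. unfold w. unfold phi. rewrite (phi_plus_Z F h Hh).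
      rewrite (phi_iter F h Hh), (rot_eq F h rho Hrot Hh).
      fold phi. unfold z. rewrite Hpsi. rewrite opp_IZR, <- INR_IZR_INZ. ring. }
    unfold G at 1. rewrite Hw. unfold w. rewrite (h_per_Z F h Hh).
    unfold G. fold z. rewrite (iter_deriv F h HF Hh q z).
    replace (h (iterate q F z) - Derive (iterate q F) z * h (iterate q F z))
      with (- (h (iterate q F z) * (Derive (iterate q F) z - 1))) by ring.
    pose proof (Hb (iterate q F z)) as Hbi.
    rewrite Rabs_Ropp, Rabs_mult, (Rabs_right (h _)) by lra.
    specialize (HC n z). fold q in HC. rewrite (Delta_Pm rho Hr Hirr) in HC.
    unfold A. rewrite Rmult_assoc. apply Rmult_le_compat; auto; try apply Rabs_pos; lra. }
  assert (HGs : forall s n, Rabs (G (s + Pm rho (S n)) - G s) <= A * Rpower (Pm rho (S n)) nu).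
  { intros s n. destruct (cf_main rho Hr Hirr n) as [_ [He _]].
    pose proof (Hshift n) as Hs. rewrite He in Hs.
    destruct (sign_pow n) as [Es|Es]; rewrite Es in Hs.
    - rewrite Rmult_1_l in Hs. apply Hs.
    - specialize (Hs (s + Pm rho (S n))).
      replace (s + Pm rho (S n) + -1 * Pm rho (S n)) with s in Hs by ring.
      rewrite Rabs_minus_sym. exact Hs. }
  assert (Hlip : forall a b, m * Rabs (psi a - psi b) <= Rabs (a - b)).
  { intros a b. destruct (Rle_dec (psi b) (psi a)) as [H|H].
    - pose proof (Hmono _ _ H). fold phi in H0. rewrite !Hpsi in H0.
      rewrite (Rabs_right (psi a - psi b)) by lra. rewrite (Rabs_right (a - b)) by nra. lra.
    - assert (psi a <= psi b) by lra. pose proof (Hmono _ _ H0). fold phi in H1. rewrite !Hpsi in H1.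
      rewrite (Rabs_left1 (psi a - psi b)) by lra. rewrite (Rabs_left1 (a - b)) by nra. lra. }
  assert (HGc : forall s eps, 0 < eps -> exists eta, 0 < eta /\
      forall u, Rabs u < eta -> Rabs (G (s + u) - G s) < eps).
  { intros s eps Heps.
    assert (Hcp : continuity_pt h (psi s)) by (apply continuity_pt_filterlim; apply Hh).
    destruct (Hcp eps Heps) as [al [Hal Hcl]].
    exists (m * al). split; [nra|]. intros u Hu.
    unfold G. destruct (Req_dec (psi (s + u)) (psi s)) as [Ee|Ee].
    { rewrite Ee, Rminus_diag, Rabs_R0. exact Heps. }
    apply (Hcl (psi (s + u))). split. split. constructor. auto.
    simpl. unfold R_dist. pose proof (Hlip (s + u) s).
    replace (s + u - s) with u in H by ring.
    apply (Rmult_lt_reg_l m); auto. lra. }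
  destruct (holder_abstract G (Pm rho) M A c delta nu
    (Pm_pos rho Hr Hirr) eq_refl (Pm_dec rho Hr Hirr) (Pm_half rho Hr Hirr)
    Hc Hdio Hd (proj2 Hnu) Halpha HGb HA HGs HGc) as [K HK].
  assert (HK0 : 0 <= K).
  { specialize (HK 0 1). pose proof (Rabs_pos (G (0 + 1) - G 0)).
    pose proof (Rpower_pos (Rabs 1) (nu * (1 + delta) - delta)). destruct (Rle_dec 0 K); auto. nra. }
  exists (K * Rpower M (nu * (1 + delta) - delta)). intros x y.
  specialize (HK (phi y) (phi x - phi y)). replace (phi y + (phi x - phi y)) with (phi x) in HK by ring.
  rewrite !HGphi in HK.
  destruct (Req_dec x y) as [Exy|Exy].
  { subst. rewrite !Rminus_diag, !Rabs_R0.
    pose proof (Rpower_pos M (nu * (1 + delta) - delta)). pose proof (Rpower_pos 0 (nu * (1 + delta) - delta)).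
    apply Rmult_le_pos; [|lra]. apply Rmult_le_pos; lra. }
  eapply Rle_trans; [exact HK|].
  rewrite Rmult_assoc. apply Rmult_le_compat_l; auto.
  rewrite Rpower_mult_distr by (auto; apply Rabs_pos_lt; lra).
  apply Rle_Rpower_l; [lra|].
  assert (Hpx : Rabs (phi x - phi y) <= M * Rabs (x - y) /\ 0 < Rabs (phi x - phi y)).
  { destruct (Rle_dec y x) as [H|H].
    - pose proof (Hmono _ _ H). fold phi in H0.
      assert (0 < m * (x - y)) by (apply Rmult_lt_0_compat; lra).
      rewrite (Rabs_right (phi x - phi y)) by lra. rewrite (Rabs_right (x - y)) by lra. split; lra.
    - assert (x <= y) by lra. pose proof (Hmono _ _ H0). fold phi in H1.
      assert (0 < m * (y - x)) by (apply Rmult_lt_0_compat; lra).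
      rewrite (Rabs_left1 (phi x - phi y)) by lra. rewrite (Rabs_left1 (x - y)) by lra. split; lra. }
  lra.
Qed.
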